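(* Let $(\Omega,\mathcal A)$ be a measurable space, let $A$ be a uniform algebra on a compact metric space $K$ with maximal ideal space $M$, and let $f:\Omega\times K\to\mathbb C$ satisfy $f(\omega,\cdot)\in A$ for all $\omega$ and $f(\cdot,z)$ measurable for all $z\in K$. Then the Gelfand transform $\widehat f:\Omega\times M\to\mathbb C$, $\widehat f(\omega,\phi)=\phi(f(\omega,\cdot))$, is a random continuous function on $M$, i.e. $\widehat f(\cdot,\phi)$ is measurable for each $\phi\in M$ and $\widehat f(\omega,\cdot)$ is continuous on $M$ for each $\omega$.
   Context: A uniform algebra on $K$ is a closed subalgebra of $C(K)$ with the sup norm containing the constants and separating points; $M$ is the set of nonzero multiplicative linear functionals on $A$ with the Gelfand (weak-* ) topology. *)

(* Defs.v *)
From HB Require Import structures.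
From mathcomp Require Import all_boot all_algebra.
From mathcomp Require Import all_classical all_reals all_analysis.
From mathcomp Require Import complex.
Import GRing.Theory Num.Theory numFieldTopology.Exports numFieldNormedType.Exports.

Set Implicit Arguments.
Unset Strict Implicit.
Unset Printing Implicit Defensive.

Local Open Scope classical_set_scope.
Local Open Scope ring_scope.
Local Open Scope complex_scope.

Definition Cx (R : rcfType) : numClosedFieldType := R[i].

Definition C_measurable d (T : measurableType d) (R : realType) (g : T -> Cx R) :=
  forall B : set (Cx R), <<s open >> B -> measurable (g @^-1` B).

Record uniform_algebra (R : realType) (K : topologicalType)
    (A : set (K -> Cx R)) : Prop := UniformAlgebra {
  ua_cont : forall a, A a -> continuous a;
  ua_add : forall a b, A a -> A b -> A (fun x => a x + b x);
  ua_scale : forall (c : Cx R) a, A a -> A (fun x => c * a x);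
  ua_mul : forall a b, A a -> A b -> A (fun x => a x * b x);
  ua_const : forall c : Cx R, A (fun _ => c);
  ua_sep : forall x y : K, x <> y -> exists2 a, A a & a x <> a y;
  ua_closed : forall g : K -> Cx R, continuous g ->
    (forall e : R, 0 < e -> exists2 a, A a & forall x, `|g x - a x| <= e%:C) ->
    A g
}.

(* Functionals are
   represented as maps on all of K -> C, normalized to vanish outside A, so that
   they are in bijection with the functionals on A. *)
Definition character (R : realType) (K : topologicalType) (A : set (K -> Cx R))
    (phi : (K -> Cx R) -> Cx R) : Prop :=
  [/\ (forall a b, A a -> A b -> phi (fun x => a x + b x) = phi a + phi b),
      (forall (c : Cx R) a, A a -> phi (fun x => c * a x) = c * phi a),
      (forall a b, A a -> A b -> phi (fun x => a x * b x) = phi a * phi b),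
      (exists2 a, A a & phi a <> 0) &
      (forall a, ~ A a -> phi a = 0)].

Definition characters (R : realType) (K : topologicalType) (A : set (K -> Cx R)) :=
  {phi : (K -> Cx R) -> Cx R | character A phi}.

HB.instance Definition _ (R : realType) (K : topologicalType)
  (A : set (K -> Cx R)) := gen_eqMixin (characters A).
HB.instance Definition _ (R : realType) (K : topologicalType)
  (A : set (K -> Cx R)) := gen_choiceMixin (characters A).

(* The maximal ideal space M of A with the Gelfand (weak-* ) topology: the
   initial topology of the inclusion of M into the space of functionals with
   the topology of pointwise convergence (coordinates outside A are constantly
   0, hence irrelevant). *)
Notation gelfand_space A :=
  (initial_topology
    (fun m : characters A => (proj1_sig m : {ptws (_ -> _) -> _}))).

Definition gelfand_transform (R : realType) (K : topologicalType)
    (A : set (K -> Cx R)) (Omega : Type) (f : Omega -> K -> Cx R)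
    (w : Omega) (phi : gelfand_space A) : Cx R :=
  proj1_sig phi (f w).
Arguments gelfand_transform {R K} A {Omega} f w phi.

(* Main.v *)
Require Import Defs.
From HB Require Import structures.
From mathcomp Require Import all_boot all_order all_algebra.
From mathcomp Require Import all_classical all_reals all_analysis.
From mathcomp Require Import complex.
From mathcomp Require Import ring lra.
Import Order.TTheory GRing.Theory Num.Theory numFieldTopology.Exports numFieldNormedType.Exports.
Local Open Scope classical_set_scope.
Local Open Scope ring_scope.
Local Open Scope complex_scope.

Definition nc {R : realType} (z : Cx R) : R := complex.Re `|z|.

Lemma ncE {R : realType} (z : Cx R) : `|z| = (nc z)%:C.
Proof. by rewrite /nc (@complex.RRe_real R) // normr_real. Qed.

Lemma nc_ge0 {R : realType} (z : Cx R) : 0 <= nc z.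
Proof. by rewrite -ler0c -ncE. Qed.

Lemma ncD {R : realType} (x y : Cx R) : nc (x + y) <= nc x + nc y.
Proof. by rewrite -lecR rmorphD /= -!ncE ler_normD. Qed.

Lemma ncM {R : realType} (x y : Cx R) : nc (x * y) = nc x * nc y.
Proof. by apply: complexI; rewrite rmorphM /= -!ncE normrM. Qed.

Lemma ncB {R : realType} (x y : Cx R) : nc (x - y) = nc (y - x).
Proof. by rewrite /nc distrC. Qed.

Lemma ncN {R : realType} (x : Cx R) : nc (- x) = nc x.
Proof. by rewrite /nc normrN. Qed.

Lemma ncV {R : realType} (x : Cx R) : nc (x^-1) = (nc x)^-1.
Proof. by apply: complexI; rewrite fmorphV /= -!ncE normfV. Qed.

Lemma ncX {R : realType} (x : Cx R) n : nc (x ^+ n) = (nc x) ^+ n.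
Proof. by apply: complexI; rewrite rmorphXn /= -!ncE normrX. Qed.

Lemma nc0 {R : realType} : nc (0 : Cx R) = 0.
Proof. by rewrite /nc normr0. Qed.

Lemma nc1 {R : realType} : nc (1 : Cx R) = 1.
Proof. by rewrite /nc normr1. Qed.

Lemma nc_eq0 {R : realType} (x : Cx R) : (nc x == 0) = (x == 0).
Proof.
apply/eqP/eqP => [h|->]; last exact: nc0.
by apply/normr0_eq0; rewrite ncE h.
Qed.

Lemma ncBtri {R : realType} (x y z : Cx R) : nc (x - z) <= nc (x - y) + nc (y - z).
Proof. by rewrite (_ : x - z = (x - y) + (y - z)) ?ncD // addrA subrK. Qed.

Lemma nc_real {R : realType} (e : R) : nc (e%:C) = `|e|.
Proof. by apply: complexI; rewrite -ncE; rewrite normc_def /= expr0n /= addr0 sqrtr_sqr. Qed.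

Section Chars.
Variables (R : realType) (K : topologicalType) (A : set (K -> Cx R)).
Hypothesis UA : uniform_algebra A.

Lemma ua_sub a b : A a -> A b -> A (fun x => a x - b x).
Proof.
move=> Aa Ab; have -> : (fun x => a x - b x) = (fun x => a x + (-1) * b x).
  by apply/funext => x; rewrite mulN1r.
by apply: (ua_add UA Aa); exact: (ua_scale UA).
Qed.

Variable phi : (K -> Cx R) -> Cx R.
Hypothesis Cphi : character A phi.

Lemma char_sub a b : A a -> A b -> phi (fun x => a x - b x) = phi a - phi b.
Proof.
case: Cphi => hadd hsc _ _ _ Aa Ab.
have -> : (fun x => a x - b x) = (fun x => a x + (-1) * b x).
  by apply/funext => x; rewrite mulN1r.
by rewrite hadd //; [rewrite hsc // mulN1r | exact: (ua_scale UA)].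
Qed.

Lemma char1 : phi (fun _ => 1) = 1.
Proof.
case: Cphi => _ _ hmul [a Aa pa] _.
have := hmul (fun _ => 1) a (ua_const UA 1) Aa.
have -> : (fun x => (fun _ => 1) x * a x) = a by apply/funext => x; rewrite mul1r.
rewrite -{1}(mul1r (phi a)) => /(mulIf (introN eqP pa)).
by move=> <-.
Qed.

Lemma char_bound a (M : R) : 0 <= M -> A a -> (forall x, nc (a x) <= M) ->
  nc (phi a) <= M.
Proof.
move=> M0 Aa Hb; rewrite leNgt; apply/negP => Hlt.
case: (Cphi) => hadd hsc hmul _ _.
set l := phi a.
have ncl0 : 0 < nc l by apply: le_lt_trans Hlt.
have l0 : l != 0 by rewrite -nc_eq0 gt_eqF.
pose t := fun x => l^-1 * a x.
have At : A t := ua_scale UA _ Aa.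
pose rho := M / nc l.
have rho0 : 0 <= rho by rewrite divr_ge0 // ltW.
have rho1 : rho < 1 by rewrite ltr_pdivrMr // mul1r.
have Ht x : nc (t x) <= rho.
  by rewrite /t ncM ncV mulrC ler_wpM2r // invr_ge0 nc_ge0.
have Hlow x : 1 - rho <= nc (1 - t x).
  have := ncD (1 - t x) (t x); rewrite subrK nc1 => h.
  have := Ht x; lra.
have Hne x : 1 - t x != 0.
  by rewrite -nc_eq0 gt_eqF //; apply: lt_le_trans (Hlow x); lra.
pose h := fun x => (1 - t x)^-1.
have Apow n : A (fun x => t x ^+ n).
  elim: n => [|n IH].
    have -> : (fun x => t x ^+ 0) = (fun _ => 1) by apply/funext => x; rewrite expr0.
    exact: ua_const.
  have -> : (fun x => t x ^+ n.+1) = (fun x => t x * t x ^+ n).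
    by apply/funext => x; rewrite exprS.
  exact: ua_mul.
have Asum N : A (fun x => \sum_(k < N) t x ^+ k).
  elim: N => [|N IH].
    have -> : (fun x => \sum_(k < 0) t x ^+ k) = (fun _ => 0).
      by apply/funext => x; rewrite big_ord0.
    exact: ua_const.
  have -> : (fun x => \sum_(k < N.+1) t x ^+ k) =
     (fun x => \sum_(k < N) t x ^+ k + t x ^+ N).
    by apply/funext => x; rewrite big_ord_recr.
  exact: ua_add.
have A1t : A (fun x => 1 - t x) by apply: ua_sub => //; exact: ua_const.
have Ah : A h.
  apply: (ua_closed UA).
    move=> x; rewrite /h; apply: (continuousV (s := fun y => 1 - t y)); first exact: Hne.
    by apply: cvgB; [exact: cvg_cst | exact: (ua_cont UA At)].
  move=> e e0.
  have rho_lt : `|rho| < 1 by rewrite ger0_norm.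
  have e1 : 0 < e * (1 - rho) by rewrite mulr_gt0 // subr_gt0.
  have [N _ HN] := cvgr0_norm_le _ (cvg_expr rho_lt) _ e1.
  have {}HN := HN N (leqnn N); rewrite ger0_norm ?exprn_ge0 // in HN.
  exists (fun x => \sum_(k < N) t x ^+ k); first exact: Asum.
  move=> x; rewrite ncE lecR.
  have E : h x - \sum_(k < N) t x ^+ k = t x ^+ N / (1 - t x).
    apply: (mulIf (Hne x)); rewrite mulrBl mulVf // divfK //.
    have -> : (\sum_(k < N) t x ^+ k) * (1 - t x) =
      - ((t x - 1) * \sum_(k < N) t x ^+ k) by ring.
    rewrite -subrX1; ring.
  rewrite E ncM ncV ncX.
  apply: (@le_trans _ _ (rho ^+ N / (1 - rho))).
    apply: ler_pM; rewrite ?exprn_ge0 ?invr_ge0 ?nc_ge0 //.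
      by apply: lerXn2r; rewrite ?nnegrE ?nc_ge0 ?Ht.
    by rewrite lef_pV2 ?posrE ?subr_gt0 //; apply: lt_le_trans (Hlow x); lra.
  by rewrite ler_pdivrMr // subr_gt0.
have := hmul _ _ A1t Ah.
have -> : (fun x => (1 - t x) * h x) = (fun _ => 1).
  by apply/funext => x; rewrite /h mulfV.
rewrite char1 char_sub //; last exact: ua_const.
rewrite char1 /t hsc // mulVf // subrr mul0r => /esym/eqP.
by rewrite eq_sym oner_eq0.
Qed.

End Chars.

Definition rn {R : realType} (n : nat) : R := (n.+1%:R)^-1.

Lemma rn_gt0 {R : realType} n : 0 < (rn n : R).
Proof. by rewrite /rn invr_gt0. Qed.

Lemma rn_le {R : realType} m n : (m <= n)%N -> (rn n : R) <= rn m.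
Proof. by move=> mn; rewrite /rn lef_pV2 ?posrE // ler_nat. Qed.

Lemma rn_ltS {R : realType} k : (rn k.+1 : R) < rn k.
Proof. by rewrite /rn ltf_pV2 ?posrE ?ltr_nat. Qed.

Lemma rn_double {R : realType} k : (rn k.*2.+1 : R) + rn k.*2.+1 = rn k.
Proof.
rewrite /rn.
have -> : (k.*2.+2)%:R = 2 * (k.+1)%:R :> R by rewrite -doubleS -mul2n natrM.
by field; rewrite addrC natr1 pnatr_eq0.
Qed.

Lemma rn_small {R : realType} (d : R) : 0 < d -> exists n, rn n < d.
Proof.
move=> d0; have [N _ HN] := near_infty_natSinv_lt (PosNum d0).
by exists N; exact: HN N (leqnn N).
Qed.

Lemma le_rn {R : realType} (a s : R) : (forall k, a <= s + rn k) -> a <= s.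
Proof.
move=> H; rewrite leNgt; apply/negP => hlt.
have [k hk] : exists k, rn k < a - s by apply: rn_small; rewrite subr_gt0.
have := H k; lra.
Qed.

Section P.
Variables (R : realType) (K : pseudoMetricType R) (x0 : K).
Definition pK : Type := K.
HB.instance Definition _ := PseudoMetric.copy pK K.
HB.instance Definition _ := isPointed.Build pK x0.
Lemma cc_pt (cK : compact [set: K]) : @cover_compact pK [set: pK].
Proof. rewrite -compact_cover. exact: cK. Qed.
End P.

Lemma cover_fin (R : realType) (K : pseudoMetricType R) : compact [set: K] ->
  forall f : K -> set K, (forall z, open (f z)) -> (forall x, f x x) ->
  exists s : seq K, forall x, exists z, z \in s /\ f z x.
Proof.
move=> cK f fo fx.
have [[x0 _]|nK] := pselect (exists x : K, True); last first.
  by exists [::] => x; exfalso; apply: nK; exists x.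
have [D _ HD] := @cc_pt R K x0 cK K [set: K] f (fun z _ => fo z) (fun x _ => ex_intro2 _ _ x Logic.I (fx x)).
exists (finmap.enum_fset D) => x.
by have [z zD bz] := HD x Logic.I; exists z.
Qed.

Section Top.
Variables (R : realType) (K : pseudoMetricType R).
Hypothesis cK : compact [set: K].

Lemma net n : exists s : seq K, forall x, exists z, z \in s /\ ball z (rn n) x.
Proof.
have [s Hs] := @cover_fin R K cK (fun z => interior (ball z (rn n)))
  (fun z => @open_interior _ _) (fun x => nbhsx_ballx x _ (rn_gt0 n) : interior _ x).
exists s => x; have [z [zs bz]] := Hs x.
by exists z; split => //; exact: interior_subset.
Qed.

Lemma loc (g : K -> Cx R) (cg : continuous g) (x : K) (eps : Cx R) (e0 : 0 < eps) :
  exists2 d : R, 0 < d & forall y, ball x d y -> `|g x - g y| < eps.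
Proof.
have := cvgr_dist_lt g (g x) (cg x) eps e0.
move=> /(_ (nbhs_filter x)) H; have [d d0 Hd] := (nbhs_ballP x _).1 H; exists d => // y /Hd.
Qed.

Lemma unif (g : K -> Cx R) : continuous g -> forall e : R, 0 < e ->
  exists n, forall x y, ball x (rn n) y -> nc (g x - g y) <= e.
Proof.
move=> cg e e0.
have Hloc x : exists n, forall y, ball x (rn n) y -> nc (g x - g y) <= e / 2.
  have e2 : 0 < (e / 2)%:C by rewrite ltcR divr_gt0.
  have [d d0 Hd] := @loc g cg x _ e2.
  have [n hn] := rn_small _ d0.
  exists n => y bxy.
  have := Hd y (le_ball (ltW hn) bxy).
  rewrite ncE ltcR => h; exact: ltW.
have /choice [N HN] := Hloc.
pose m z := (N z).*2.+1.
have [D HD] := @cover_fin R K cK (fun z => interior (ball z (rn (m z))))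
  (fun z => @open_interior _ _) (fun x => nbhsx_ballx x _ (rn_gt0 _) : interior _ x).
exists (\max_(z <- D) m z) => x y bxy.
have [z [zD bz]] := HD x.
have {}bz := interior_subset bz.
have mz : (m z <= \max_(z <- D) m z)%N.
  by apply: (leq_bigmax_seq (P := xpredT)).
have bzy : ball z (rn (N z)) y.
  rewrite -rn_double; apply: ball_triangle bz _.
  exact: (@le_ball R K x _ _ (@rn_le R _ _ mz) y bxy).
have bzx : ball z (rn (N z)) x.
  apply: le_ball bz; rewrite /m -[X in _ <= X]rn_double lerDl; exact: ltW (rn_gt0 _).
have h1 := HN z x bzx.
have h2 := HN z y bzy.
have := ncBtri (g x) (g z) (g y); rewrite (ncB (g x) (g z)).
move: h1 h2; lra.
Qed.

End Top.

Definition toC {R : realType} (qq : rat * rat) : Cx R := (ratr qq.1 +i* ratr qq.2)%C.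

Lemma rat_approx1 {R : realType} (a e : R) : 0 < e -> exists q : rat, `|a - ratr q| < e.
Proof.
move=> e0.
have [y [Hy [q _ qy]]] := @dense_rat R (ball a e) (ex_intro _ a (ballxx a e0)) (ball_open a e).
by exists q; rewrite qy; move: Hy; rewrite -ball_normE.
Qed.

Lemma rat_approx {R : realType} (z : Cx R) (e : R) : 0 < e ->
  exists qq : rat * rat, nc (z - toC qq) <= e.
Proof.
move=> e0; case: z => a b.
have e2 : 0 < e / 2 by rewrite divr_gt0.
have [q1 h1] := rat_approx1 a _ e2.
have [q2 h2] := rat_approx1 b _ e2.
exists (q1, q2).
rewrite /nc normc_def /= -[e]ger0_norm; last exact: ltW.
rewrite -sqrtr_sqr ler_sqrt ?exprn_ge0 //.
move: h1 h2; rewrite !ltr_norml => /andP [h1 h1'] /andP [h2 h2'].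
nra.
exact: ltW.
Qed.

Lemma all2_map_r (T1 T2 : Type) (r : T1 -> T2 -> bool) (s : seq T1) (f : T1 -> T2) :
  all2 r s (map f s) = all (fun x => r x (f x)) s.
Proof. by elim: s => //= x s ->. Qed.

Lemma rn_quad {R : realType} k :
  (rn (k.*2.+1).*2.+1 : R) + rn (k.*2.+1).*2.+1 + rn (k.*2.+1).*2.+1 + rn (k.*2.+1).*2.+1 = rn k.
Proof. rewrite -(rn_double k) -(rn_double k.*2.+1); lra. Qed.

Lemma sepA (R : realType) (K : pseudoMetricType R) (A : set (K -> Cx R)) :
  compact [set: K] -> uniform_algebra A ->
  exists c : (nat * nat * seq (rat * rat)) -> (K -> Cx R),
    (forall i, A (c i)) /\
    forall g, A g -> forall k, exists i, forall x, nc (g x - c i x) <= rn k.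
Proof.
move=> cK UA.
have /choice [N HN] := @net R K cK.
have /choice [ap Hap] : forall p : Cx R * nat, exists qq, nc (p.1 - toC qq) <= rn p.2.
  by move=> p; apply: rat_approx; exact: rn_gt0.
pose P (i : nat * nat * seq (rat * rat)) (c : K -> Cx R) :=
  (forall x y, ball x (rn i.1.1) y -> nc (c x - c y) <= rn i.1.2) /\
  all2 (fun z qq => nc (c z - toC qq) <= rn i.1.2) (N i.1.1) i.2.
have /choice [c Hc] : forall i, exists c, A c /\ ((exists c', A c' /\ P i c') -> P i c).
  move=> i; case: (pselect (exists c', A c' /\ P i c')) => [[c' [Ac' Pc']]|nP].
    by exists c'.
  by exists (fun _ => 0); split; [exact: ua_const | move=> /nP].
exists c; split; first by move=> i; exact: (Hc i).1.
move=> g Ag k.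
pose m := (k.*2.+1).*2.+1.
have [n Hn] := @unif R K cK g (ua_cont UA Ag) _ (rn_gt0 m).
pose q := map (fun z => ap (g z, m)) (N n).
have Pg : P (n, m, q) g.
  split => //=; rewrite /q all2_map_r; apply/allP => z _ /=.
  exact: (Hap (g z, m)).
have [oscc allc] := (Hc (n, m, q)).2 (ex_intro _ g (conj Ag Pg)).
exists (n, m, q) => x.
move: allc; rewrite /= /q all2_map_r => /allP allc.
have [z [zN bz]] := HN n x.
have h1 := Hn z x bz.
have h2 := Hap (g z, m).
have h3 := allc z zN.
have h4 := oscc z x bz.
rewrite /= in h1 h2 h3 h4.
have t1 := ncBtri (g x) (g z) (c (n, m, q) x).
have t2 := ncBtri (g z) (toC (ap (g z, m))) (c (n, m, q) x).
have t3 := ncBtri (toC (ap (g z, m))) (c (n, m, q) z) (c (n, m, q) x).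
have e1 : nc (g x - g z) = nc (g z - g x) := ncB _ _.
have e3 : nc (toC (ap (g z, m)) - c (n, m, q) z) = nc (c (n, m, q) z - toC (ap (g z, m))) := ncB _ _.
rewrite -/q in h3 *.
rewrite -rn_quad; lra.
Qed.
Lemma gelfand_cont (R : realType) (K : topologicalType) (A : set (K -> Cx R))
  (Omega : Type) (f : Omega -> K -> Cx R) (w : Omega) :
  continuous (gelfand_transform A f w).
Proof.
move=> phi.
have H := @initial_continuous _ _ (fun m : characters A => (proj1_sig m : {ptws (K -> Cx R) -> Cx R})) phi.
exact: (continuous_comp H (@proj_continuous _ _ (f w) _)).
Qed.

Lemma Cmeas_open d (Omega : measurableType d) (R : realType) (g : Omega -> Cx R) :
  (forall U : set (Cx R), open U -> measurable (g @^-1` U)) -> C_measurable g.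
Proof.
move=> HU B HB.
have : sigma_algebra setT [set B : set (Cx R) | measurable (g @^-1` B)].
  split => /=.
  - by rewrite preimage_set0.
  - by move=> X mX; rewrite setTD preimage_setC; exact: measurableC.
  - by move=> F mF; rewrite preimage_bigcup; exact: bigcupT_measurable.
by move=> /smallest_sub /(_ HU) /(_ _ HB).
Qed.

Definition Tset {R : realType} {K Omega : Type} (f : Omega -> K -> Cx R)
  (N : nat -> seq K) (c : K -> Cx R) (s : R) : set Omega :=
  \bigcap_n [set w | all (fun z => nc (c z - f w z) < s) (N n)].

Lemma Tset_meas d (Omega : measurableType d) (R : realType) (K : Type)
  (f : Omega -> K -> Cx R) (N : nat -> seq K) (c : K -> Cx R) (s : R) :
  (forall z : K, C_measurable (fun w => f w z)) -> measurable (Tset f N c s).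
Proof.
move=> Hf; apply: bigcapT_measurable => n.
elim: (N n) => [|z l IH] /=.
  by rewrite (_ : [set w | true] = setT) //; apply/seteqP; split.
rewrite (_ : [set w | _ && _] = (fun w => f w z) @^-1` ball (c z) s%:C `&`
   [set w | all (fun z => nc (c z - f w z) < s) l]).
  apply: measurableI => //; apply: Hf; apply: sub_gen_smallest; exact: ball_open.
apply/seteqP; split => w /=.
  by move=> /andP [h1 h2]; split => //; rewrite -ball_normE /ball_ /= ncE ltcR.
by move=> [h1 h2]; apply/andP; split => //; move: h1; rewrite -ball_normE /ball_ /= ncE ltcR.
Qed.

Lemma Tset_in (R : realType) (K : pseudoMetricType R) (Omega : Type)
  (f : Omega -> K -> Cx R) (N : nat -> seq K) (c : K -> Cx R) (s s' : R) w :
  s' < s -> (forall x, nc (f w x - c x) <= s') -> Tset f N c s w.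
Proof.
move=> ss H n _ /=; apply/allP => z _.
by rewrite ncB; apply: le_lt_trans ss.
Qed.

Lemma Tset_out (R : realType) (K : pseudoMetricType R) (A : set (K -> Cx R))
  (Omega : Type) (f : Omega -> K -> Cx R) (N : nat -> seq K) (c : K -> Cx R) (s : R) w :
  compact [set: K] -> uniform_algebra A -> A (f w) -> A c ->
  (forall n x, exists z, z \in N n /\ ball z (rn n) x) ->
  Tset f N c s w -> forall x, nc (f w x - c x) <= s.
Proof.
move=> cK UA Af Ac HN Tw x.
have Ah := @ua_sub R K A UA _ _ Af Ac.
apply: le_rn => k.
have [n Hn] := @unif R K cK _ (ua_cont UA Ah) _ (rn_gt0 k).
have [z [zN bz]] := HN n x.
have := Hn x z (ball_sym bz) => /= h1.
have := allP (Tw n Logic.I) z zN => /= h2.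
have := ncBtri (f w x - c x) (f w z - c z) 0.
rewrite !subr0 (ncB (f w z)) => h3.
lra.
Qed.

Theorem proposition5p4 (d : measure_display) (Omega : measurableType d)
  (R : realType) (K : pseudoMetricType R) (A : set (K -> Cx R))
  (f : Omega -> K -> Cx R) :
  hausdorff_space K -> compact [set: K] ->
  uniform_algebra A ->
  (forall w, A (f w)) ->
  (forall z : K, C_measurable (fun w => f w z)) ->
  (forall phi : gelfand_space A,
      C_measurable (fun w => gelfand_transform A f w phi)) /\
  (forall w : Omega, continuous (gelfand_transform A f w)).
Proof.
move=> _ cK UA Af Hf; split; last by move=> w; exact: gelfand_cont.
move=> phi; apply: Cmeas_open => U oU.
pose p := proj1_sig phi.
have Cp : character A p := proj2_sig phi.
have [c [Ac Hc]] := @sepA R K A cK UA.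
have /choice [N HN] := @net R K cK.
pose E (ik : (nat * nat * seq (rat * rat)) * nat) : set Omega :=
  if pselect (forall u, nc (u - p (c ik.1)) <= rn ik.2 -> U u)
  then Tset f N (c ik.1) (rn ik.2) else set0.
have Hdist w i (s : R) : 0 <= s -> Tset f N (c i) s w -> nc (p (f w) - p (c i)) <= s.
  move=> s0 Tw.
  rewrite -(@char_sub R K A UA p Cp) //.
  apply: (@char_bound R K A UA p Cp) => //; first exact: (@ua_sub R K A UA).
  exact: (@Tset_out R K A Omega f N (c i) s w cK UA (Af w) (Ac i) HN Tw).
have -> : (fun w => gelfand_transform A f w phi) @^-1` U = \bigcup_ik E ik.
  apply/seteqP; split => w /=; last first.
    case=> ik _; rewrite /E; case: pselect => // cond Tw.
    apply cond.
    by apply: (Hdist w ik.1 (rn ik.2)) Tw; exact: ltW (rn_gt0 _).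
  move=> Uw.
  have : nbhs (p (f w)) U by apply: open_nbhs_nbhs; split.
  move=> /(nbhs_ballP _ _) [eps eps0 Heps].
  have [er [er0 eE]] : exists er : R, 0 < er /\ eps = er%:C.
    move: eps eps0 {Heps} => [a b]; rewrite /= ltcE /= => /andP [/eqP -> ha]; by exists a.
  have [k hk] : exists k, rn k < er / 2 by apply: rn_small; rewrite divr_gt0.
  have [i Hi] := Hc (f w) (Af w) k.+1.
  exists (i, k) => //.
  have hkk : rn k.+1 < (rn k : R) := rn_ltS k.
  rewrite /E; case: pselect => [H|nC]; first exact: (@Tset_in R K Omega f N (c i) (rn k) (rn k.+1) w hkk Hi).
  exfalso; apply: nC => u hu; apply: Heps.
  rewrite /= -ball_normE /ball_ /= eE ncE ltcR.
  have h1 : nc (p (f w) - p (c i)) <= rn k.+1.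
    rewrite -(@char_sub R K A UA p Cp) //.
    apply: (@char_bound R K A UA p Cp) => //; first exact: ltW (rn_gt0 _).
    exact: (@ua_sub R K A UA).
  have := ncBtri (p (f w)) (p (c i)) u.
  rewrite (ncB (p (c i))) /=.
  lra.
apply: countable_bigcupT_measurable; first exact: countableP.
move=> ik; rewrite /E; case: pselect => H //.
  exact: Tset_meas.
exact: measurable0.
Qed.
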